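(* Let $\alpha\in(0,1]$, $F\in C^{1,\alpha}_{\mathsf h}(\mathbb H,\mathbb R^2)$ and $p\in\mathbb H$ nondegenerate for $F$. Then there exists $\varepsilon_1>0$ such that whenever $x,y\in B(p,\varepsilon_1)$ satisfy $F(x)=F(y)$ and $[x^{-1}y]^{\mathsf v}\le[x^{-1}y]^{\mathsf h}$, we have $x=y$. In particular this holds if $(x^{-1}y)^{\mathsf v}=0$.
   Context: The Heisenberg group $\mathbb H$ is $\mathbb R^3$ with product $(x^1,x^2,x^3)(y^1,y^2,y^3)=(x^1+y^1,x^2+y^2,x^3+y^3+x^1y^2-x^2y^1)$, inverse $x^{-1}=-x$. For $x\in\mathbb H$: $x^{\mathsf h}=(x^1,x^2)$, $x^{\mathsf v}=x^3$, $[x]^{\mathsf h}=|x^{\mathsf h}|$, $[x]^{\mathsf v}=\sqrt{|x^3|}$. $\mathsf d$ is a fixed distance on $\mathbb H$, left-invariant and $1$-homogeneous w.r.t. dilations $\delta_r(x)=(rx^1,rx^2,r^2x^3)$; $B(x,r)$ is the open $\mathsf d$-ball. $X_1=\partial_1-x^2\partial_3$, $X_2=\partial_2+x^1\partial_3$. $C^{1,\alpha}_{\mathsf h}(\mathbb H,\mathbb R^2)$: maps $F$ with $X_1F,X_2F$ existing everywhere and $\nabla_{\mathsf h}F=[X_1F,X_2F]$ $\alpha$-Hölder w.r.t. $\mathsf d$ on bounded sets. $p$ is nondegenerate for $F$ if $\nabla_{\mathsf h}F(p)$ is invertible. *)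

(* Defs.v *)
From Stdlib Require Import Reals.
Open Scope R_scope.

Definition H : Type := (R * R * R)%type.

Definition h1 (x : H) : R := fst (fst x).
Definition h2 (x : H) : R := snd (fst x).
Definition h3 (x : H) : R := snd x.

Definition Hmul (x y : H) : H :=
  (h1 x + h1 y, h2 x + h2 y, h3 x + h3 y + h1 x * h2 y - h2 x * h1 y).
Definition Hinv (x : H) : H := (- h1 x, - h2 x, - h3 x).
Definition H0 : H := (0, 0, 0).

Definition dil (r : R) (x : H) : H := (r * h1 x, r * h2 x, r * r * h3 x).

Definition hnorm (x : H) : R := sqrt (h1 x * h1 x + h2 x * h2 x).
Definition vnorm (x : H) : R := sqrt (Rabs (h3 x)).

Definition is_distance (d : H -> H -> R) : Prop :=
  (forall x y, 0 <= d x y) /\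
  (forall x y, d x y = 0 <-> x = y) /\
  (forall x y, d x y = d y x) /\
  (forall x y z, d x z <= d x y + d y z).

Definition left_invariant (d : H -> H -> R) : Prop :=
  forall z x y, d (Hmul z x) (Hmul z y) = d x y.

Definition homogeneous (d : H -> H -> R) : Prop :=
  forall r x y, 0 < r -> d (dil r x) (dil r y) = r * d x y.

Definition homogeneous_distance (d : H -> H -> R) : Prop :=
  is_distance d /\ left_invariant d /\ homogeneous d.

Definition ball (d : H -> H -> R) (x : H) (r : R) (y : H) : Prop := d x y < r.

(* Left-invariant horizontal vector fields:
   X1 f (x) = d/dt f(x . (t,0,0)) at t = 0 = (d_1 - x2 d_3) f (x)
   X2 f (x) = d/dt f(x . (0,t,0)) at t = 0 = (d_2 + x1 d_3) f (x) *)
Definition is_X1_deriv (f : H -> R) (x : H) (l : R) : Prop :=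
  derivable_pt_lim (fun t => f (h1 x + t, h2 x, h3 x - h2 x * t)) 0 l.
Definition is_X2_deriv (f : H -> R) (x : H) (l : R) : Prop :=
  derivable_pt_lim (fun t => f (h1 x, h2 x + t, h3 x + h1 x * t)) 0 l.

(* F = (F1, F2) : H -> R^2 ;  G x = nabla_h F (x) = [X1 F, X2 F], given
   entrywise: G x = ((X1 F1, X2 F1), (X1 F2, X2 F2)). *)
Definition Mat2 : Type := ((R * R) * (R * R))%type.

Definition is_horiz_grad (F : H -> R * R) (G : H -> Mat2) : Prop :=
  forall x,
    is_X1_deriv (fun z => fst (F z)) x (fst (fst (G x))) /\
    is_X2_deriv (fun z => fst (F z)) x (snd (fst (G x))) /\
    is_X1_deriv (fun z => snd (F z)) x (fst (snd (G x))) /\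
    is_X2_deriv (fun z => snd (F z)) x (snd (snd (G x))).

Definition mat_dist (A B : Mat2) : R :=
  Rmax (Rmax (Rabs (fst (fst A) - fst (fst B))) (Rabs (snd (fst A) - snd (fst B))))
       (Rmax (Rabs (fst (snd A) - fst (snd B))) (Rabs (snd (snd A) - snd (snd B)))).

Definition holder_on_bounded (d : H -> H -> R) (alpha : R) (G : H -> Mat2) : Prop :=
  forall Rb, 0 < Rb -> exists C, 0 <= C /\
    forall x y, d H0 x < Rb -> d H0 y < Rb ->
      mat_dist (G x) (G y) <= C * Rpower (d x y) alpha.

Definition C1alpha_h_with_grad (d : H -> H -> R) (alpha : R)
  (F : H -> R * R) (G : H -> Mat2) : Prop :=
  is_horiz_grad F G /\ holder_on_bounded d alpha G.

Definition mat_det (A : Mat2) : R :=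
  fst (fst A) * snd (snd A) - snd (fst A) * fst (snd A).

Definition nondegenerate (G : H -> Mat2) (p : H) : Prop := mat_det (G p) <> 0.

(* Main.v *)
Require Import Defs.
From Stdlib Require Import Reals Lra Psatz.
Open Scope R_scope.
Ltac heq := unfold Hmul, Hinv, dil, H0, h1, h2, h3; simpl; apply (f_equal2 pair); [apply (f_equal2 pair)|]; ring.


Lemma linv d : left_invariant d -> forall w v, d w (Hmul w v) = d H0 v.
Proof. intros Hl w v. rewrite <- (Hl w H0 v). f_equal.
 destruct w as [[? ?] ?]; heq. Qed.

Lemma dinv d : is_distance d -> left_invariant d -> forall v, d H0 (Hinv v) = d H0 v.
Proof. intros [_ [_ [Hs _]]] Hl v. rewrite <- (linv d Hl v).
 replace (Hmul v (Hinv v)) with H0 by (destruct v as [[? ?] ?]; heq). apply Hs. Qed.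

Lemma hdil d : homogeneous d -> forall r v, 0 < r -> d H0 (dil r v) = r * d H0 v.
Proof. intros Hh r v Hr. rewrite <- (Hh r H0 v Hr). f_equal. heq. Qed.

Lemma dself d : is_distance d -> forall v, d v v = 0.
Proof. intros [_ [Hz _]] v. apply Hz. reflexivity. Qed.

Lemma dX d : homogeneous_distance d -> forall t, d H0 (t,0,0) = Rabs t * d H0 (1,0,0).
Proof. intros [Hd [Hl Hh]] t.
 assert (P : forall t, 0 < t -> d H0 (t,0,0) = t * d H0 (1,0,0)).
 { intros u Hu. rewrite <- (hdil d Hh u (1,0,0) Hu). f_equal. heq. }
 destruct (Rtotal_order t 0) as [Ht|[Ht|Ht]].
 - replace (t,0,0) with (Hinv (-t,0,0)) by heq. rewrite dinv by assumption.
   rewrite P by lra. rewrite Rabs_left by lra. ring.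
 - subst. rewrite Rabs_R0. change (d H0 H0 = 0 * d H0 (1,0,0)). rewrite dself by assumption. ring.
 - rewrite P by lra. rewrite Rabs_right by lra. ring.
Qed.

Lemma dY d : homogeneous_distance d -> forall t, d H0 (0,t,0) = Rabs t * d H0 (0,1,0).
Proof. intros [Hd [Hl Hh]] t.
 assert (P : forall t, 0 < t -> d H0 (0,t,0) = t * d H0 (0,1,0)).
 { intros u Hu. rewrite <- (hdil d Hh u (0,1,0) Hu). f_equal. heq. }
 destruct (Rtotal_order t 0) as [Ht|[Ht|Ht]].
 - replace (0,t,0) with (Hinv (0,-t,0)) by heq. rewrite dinv by assumption.
   rewrite P by lra. rewrite Rabs_left by lra. ring.
 - subst. rewrite Rabs_R0. change (d H0 H0 = 0 * d H0 (0,1,0)). rewrite dself by assumption. ring.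
 - rewrite P by lra. rewrite Rabs_right by lra. ring.
Qed.

Lemma dZ d : homogeneous_distance d -> forall c, d H0 (0,0,c) = sqrt (Rabs c) * d H0 (0,0,1).
Proof. intros [Hd [Hl Hh]] t.
 assert (P : forall t, 0 < t -> d H0 (0,0,t) = sqrt t * d H0 (0,0,1)).
 { intros u Hu. rewrite <- (hdil d Hh (sqrt u) (0,0,1)) by (apply sqrt_lt_R0; lra). f_equal.
   unfold dil, h1, h2, h3; simpl. rewrite Rmult_1_r, sqrt_sqrt by lra. apply (f_equal2 pair); [apply (f_equal2 pair)|]; ring. }
 destruct (Rtotal_order t 0) as [Ht|[Ht|Ht]].
 - replace (0,0,t) with (Hinv (0,0,-t)) by heq. rewrite dinv by assumption.
   rewrite P by lra. rewrite Rabs_left by lra. ring.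
 - subst. rewrite Rabs_R0, sqrt_0. change (d H0 H0 = 0 * d H0 (0,0,1)). rewrite dself by assumption. ring.
 - rewrite P by lra. rewrite Rabs_right by lra. ring.
Qed.

Lemma tri4 d : is_distance d -> left_invariant d -> forall z u v w,
  d H0 (Hmul (Hmul (Hmul z u) v) w) <= d H0 z + d H0 u + d H0 v + d H0 w.
Proof. intros Hd Hl z u v w. destruct Hd as [_ [_ [_ Ht]]].
 pose proof (Ht H0 z (Hmul z u)) as T1. pose proof (Ht H0 (Hmul z u) (Hmul (Hmul z u) v)) as T2.
 pose proof (Ht H0 (Hmul (Hmul z u) v) (Hmul (Hmul (Hmul z u) v) w)) as T3.
 rewrite !linv in * by assumption. lra. Qed.

Lemma dpos d : is_distance d -> forall x y, x <> y -> 0 < d x y.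
Proof. intros [H1 [H2 _]] x y N. destruct (H1 x y); auto. exfalso. apply N, H2. auto. Qed.

Lemma hbound d : homogeneous_distance d -> exists Cz, 0 < Cz /\ forall z,
  Rabs (h1 z) <= Cz * d H0 z /\ Rabs (h2 z) <= Cz * d H0 z.
Proof. intros HD. pose proof HD as [Hd [Hl Hh]].
 set (k1 := d H0 (1,0,0)). set (k2 := d H0 (0,1,0)). set (V := d H0 (0,0,1)).
 assert (k1p : 0 <= k1) by apply Hd. assert (k2p : 0 <= k2) by apply Hd.
 assert (Vp : 0 < V). { apply dpos; auto. unfold H0; intro E; injection E; lra. }
 exists (2 * (1+k1+k2)^2 / V^2). split. { apply Rdiv_lt_0_compat; nra. }
 intros [[a b] c]. set (D := d H0 (a,b,c)). assert (Dp : 0 <= D) by apply Hd.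
 destruct (Req_dec D 0) as [D0|D0].
 { assert (E : H0 = (a,b,c)) by (apply Hd; exact D0). unfold H0 in E. injection E; intros; subst.
   unfold h1, h2; simpl. rewrite Rabs_R0, D0; lra. }
 assert (Dq : 0 < D) by lra.
 assert (key : forall q, Rabs q * D * V^2 <= 2 * D^2 * (1+k1+k2)^2 ->
            Rabs q <= 2 * (1+k1+k2)^2 / V^2 * D).
 { intros q Hq. apply Rmult_le_reg_r with (D * V^2). { apply Rmult_lt_0_compat; [lra|apply pow_lt; lra]. }
   replace (2 * (1 + k1 + k2) ^ 2 / V ^ 2 * D * (D * V ^ 2)) with (2 * D^2 * (1+k1+k2)^2) by (field; lra). rewrite Rmult_assoc. lra. }
 assert (sq2 : forall q k, 0 <= k -> sqrt (Rabs q) * V <= 2*D + 2*D*k -> k <= k1 + k2 ->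
    Rabs q * V^2 <= 4 * D^2 * (1+k1+k2)^2).
 { intros q k Hk Hs Hk2. assert (0 <= sqrt (Rabs q)) by apply sqrt_pos.
   assert (E : Rabs q = sqrt (Rabs q) * sqrt (Rabs q)) by (rewrite sqrt_sqrt; auto; apply Rabs_pos).
   rewrite E. set (s := sqrt (Rabs q)) in *. clearbody s.
   assert (D*k <= D*(k1+k2)) by (apply Rmult_le_compat_l; lra).
   assert (s * V <= 2*D*(1+k1+k2)) by lra.
   assert (0 <= s * V) by (apply Rmult_le_pos; lra).
   replace (s*s*V^2) with ((s*V)*(s*V)) by ring.
   replace (4 * D ^ 2 * (1 + k1 + k2) ^ 2) with ((2*D*(1+k1+k2))*(2*D*(1+k1+k2))) by ring.
   apply Rmult_le_compat; lra. }
 split.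
 -
   assert (C : Hmul (Hmul (Hmul (a,b,c) (0,D,0)) (Hinv (a,b,c))) (0,-D,0) = (0,0,2*a*D)) by heq.
   pose proof (tri4 d Hd Hl (a,b,c) (0,D,0) (Hinv (a,b,c)) (0,-D,0)) as T.
   rewrite C, (dZ d HD), (dY d HD D), (dY d HD (-D)), (dinv d Hd Hl) in T. fold D V k2 in T.
   rewrite (Rabs_right D), Rabs_Ropp, (Rabs_right D) in T by lra.
   specialize (sq2 (2*a*D) k2 k2p ltac:(lra) ltac:(lra)).
   apply key. simpl. rewrite !Rabs_mult, (Rabs_right 2), (Rabs_right D) in sq2 by lra. simpl in sq2. unfold h1, h2; simpl. set (A1 := Rabs a) in *. set (W := 1+k1+k2) in *. clearbody A1 W. replace (A1 * D * (V*(V*1))) with ((2 * A1 * D * (V * (V * 1)))/2) by field. replace (2 * (D * (D * 1)) * (W * (W * 1))) with ((4 * (D * (D * 1)) * (W * (W * 1)))/2) by field. lra.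
 - assert (C : Hmul (Hmul (Hmul (a,b,c) (D,0,0)) (Hinv (a,b,c))) (-D,0,0) = (0,0,-(2*b*D))) by heq.
   pose proof (tri4 d Hd Hl (a,b,c) (D,0,0) (Hinv (a,b,c)) (-D,0,0)) as T.
   rewrite C, (dZ d HD), (dX d HD D), (dX d HD (-D)), (dinv d Hd Hl) in T. fold D V k1 in T.
   rewrite !Rabs_Ropp, (Rabs_right D) in T by lra.
   specialize (sq2 (2*b*D) k1 k1p ltac:(lra) ltac:(lra)).
   apply key. simpl. rewrite !Rabs_mult, (Rabs_right 2), (Rabs_right D) in sq2 by lra. simpl in sq2. unfold h1, h2; simpl. set (A1 := Rabs b) in *. set (W := 1+k1+k2) in *. clearbody A1 W. replace (A1 * D * (V*(V*1))) with ((2 * A1 * D * (V * (V * 1)))/2) by field. replace (2 * (D * (D * 1)) * (W * (W * 1))) with ((4 * (D * (D * 1)) * (W * (W * 1)))/2) by field. lra.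
Qed.


Lemma dshift (phi psi : R -> R) c l : derivable_pt_lim psi 0 l ->
  (forall h, phi (c+h) = psi h) -> derivable_pt_lim phi c l.
Proof. intros Hd E eps He. destruct (Hd eps He) as [del Hdel]. exists del.
 intros h Hh Hh2. specialize (Hdel h Hh Hh2). rewrite Rplus_0_l in Hdel.
 rewrite E. replace (phi c) with (psi 0). exact Hdel. rewrite <- E, Rplus_0_r. reflexivity. Qed.

Lemma mvt_bound (phi g' : R -> R) t P eta :
  (forall c, derivable_pt_lim phi c (g' c)) ->
  (forall th, Rabs th <= Rabs t -> Rabs (g' th - P) <= eta) ->
  Rabs (phi t - phi 0 - t*P) <= Rabs t * eta.
Proof. intros Hd Hb. destruct (Rtotal_order t 0) as [Ht|[Ht|Ht]].
 - destruct (MVT_cor2 phi g' t 0 Ht (fun c _ => Hd c)) as [c [E Hc]].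
   replace (phi t - phi 0 - t*P) with (- ((g' c - P) * (0 - t))) by lra.
   rewrite Rabs_Ropp, Rabs_mult. replace (0 - t) with (-t) by ring. rewrite Rabs_Ropp.
   rewrite Rmult_comm. apply Rmult_le_compat_l. apply Rabs_pos. apply Hb.
   rewrite !Rabs_left by lra. lra.
 - subst. rewrite Rabs_R0. replace (phi 0 - phi 0 - 0*P) with 0 by ring. rewrite Rabs_R0; lra.
 - destruct (MVT_cor2 phi g' 0 t Ht (fun c _ => Hd c)) as [c [E Hc]].
   replace (phi t - phi 0 - t*P) with ((g' c - P) * (t - 0)) by lra.
   rewrite Rabs_mult. replace (t - 0) with t by ring.
   rewrite Rmult_comm. apply Rmult_le_compat_l. apply Rabs_pos. apply Hb.
   rewrite !Rabs_right by lra. lra.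
Qed.

Lemma segX (f g : H -> R) (w : H) (t P eta : R) :
 (forall q, is_X1_deriv f q (g q)) ->
 (forall th, Rabs th <= Rabs t -> Rabs (g (Hmul w (th,0,0)) - P) <= eta) ->
 Rabs (f (Hmul w (t,0,0)) - f w - t * P) <= Rabs t * eta.
Proof. intros Hd Hb.
 replace (f w) with ((fun u => f (Hmul w (u,0,0))) 0) by (f_equal; destruct w as [[? ?] ?]; heq).
 apply (mvt_bound (fun u => f (Hmul w (u,0,0))) (fun u => g (Hmul w (u,0,0)))); auto.
 intro c. eapply dshift. apply (Hd (Hmul w (c,0,0))).
 intro h. simpl. f_equal. destruct w as [[? ?] ?]; heq.
Qed.

Lemma segY (f g : H -> R) (w : H) (t P eta : R) :
 (forall q, is_X2_deriv f q (g q)) ->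
 (forall th, Rabs th <= Rabs t -> Rabs (g (Hmul w (0,th,0)) - P) <= eta) ->
 Rabs (f (Hmul w (0,t,0)) - f w - t * P) <= Rabs t * eta.
Proof. intros Hd Hb.
 replace (f w) with ((fun u => f (Hmul w (0,u,0))) 0) by (f_equal; destruct w as [[? ?] ?]; heq).
 apply (mvt_bound (fun u => f (Hmul w (0,u,0))) (fun u => g (Hmul w (0,u,0)))); auto.
 intro c. eapply dshift. apply (Hd (Hmul w (0,c,0))).
 intro h. simpl. f_equal. destruct w as [[? ?] ?]; heq.
Qed.


Lemma mat_dist_self A : mat_dist A A = 0.
Proof. unfold mat_dist. rewrite !Rminus_diag, Rabs_R0, !Rmax_left; lra. Qed.

Lemma gcont d alpha G p : homogeneous_distance d -> 0 < alpha -> holder_on_bounded d alpha G ->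
  forall eta, 0 < eta -> exists del, 0 < del <= 1 /\ forall q, d p q < del -> mat_dist (G p) (G q) <= eta.
Proof. intros [Hd [Hl Hh]] Ha Hhol eta He.
 destruct (Hhol (d H0 p + 1)) as [C [C0 HC]]. { pose proof (proj1 Hd H0 p). lra. }
 set (t := eta / (C+1)). assert (tp : 0 < t) by (unfold t; apply Rdiv_lt_0_compat; lra).
 assert (Rp : 0 < Rpower t (/alpha)) by (unfold Rpower; apply exp_pos).
 exists (Rmin 1 (Rpower t (/alpha))). split. { split. apply Rmin_glb_lt; lra. apply Rmin_l. }
 intros q Hq. pose proof (Rmin_l 1 (Rpower t (/alpha))) as m1. pose proof (Rmin_r 1 (Rpower t (/alpha))) as m2.
 destruct Hd as [Hnn [Hz [Hs Ht]]].
 destruct (Req_dec (d p q) 0) as [E|E].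
 { apply Hz in E. subst. rewrite mat_dist_self. lra. }
 assert (dq : 0 < d p q) by (pose proof (Hnn p q); lra).
 pose proof (Hnn H0 p) as n0. eapply Rle_trans. apply HC. lra. pose proof (Ht H0 p q) as t0; lra.
 assert (Rpower (d p q) alpha < t).
 { replace t with (Rpower (Rpower t (/alpha)) alpha).
   apply Rlt_Rpower_l; lra. rewrite Rpower_mult, Rinv_l, Rpower_1; lra. }
 assert (C * Rpower (d p q) alpha <= C * t) by (apply Rmult_le_compat_l; lra).
 assert (C * t <= eta). { unfold t. apply (Rmult_le_reg_r (C+1)). lra.
   replace (C * (eta / (C + 1)) * (C + 1)) with (C*eta) by (field; lra). nra. }
 lra.
Qed.

Lemma absle u v : Rabs u <= v -> -v <= u <= v.
Proof. unfold Rabs; destruct (Rcase_abs u); lra. Qed.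

Lemma stepX d : homogeneous_distance d -> forall p w th,
  d p (Hmul w (th,0,0)) <= d p w + Rabs th * d H0 (1,0,0).
Proof. intros HD p w th. pose proof HD as [[_ [_ [_ Ht]]] [Hl _]].
 rewrite <- (dX d HD th), <- (linv d Hl w). apply Ht. Qed.

Lemma stepY d : homogeneous_distance d -> forall p w th,
  d p (Hmul w (0,th,0)) <= d p w + Rabs th * d H0 (0,1,0).
Proof. intros HD p w th. pose proof HD as [[_ [_ [_ Ht]]] [Hl _]].
 rewrite <- (dY d HD th), <- (linv d Hl w). apply Ht. Qed.


Theorem mainTheorem3 (d : H -> H -> R) (alpha : R) (F : H -> R * R)
  (G : H -> Mat2) (p : H) :
  homogeneous_distance d ->
  0 < alpha <= 1 ->
  C1alpha_h_with_grad d alpha F G ->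
  nondegenerate G p ->
  exists eps1 : R, 0 < eps1 /\
    forall x y : H,
      ball d p eps1 x -> ball d p eps1 y ->
      F x = F y ->
      vnorm (Hmul (Hinv x) y) <= hnorm (Hmul (Hinv x) y) ->
      x = y.
Proof.
intros HD Ha [Hg Hhol] Hnd.
pose proof HD as [Hd [Hl Hh]].
set (P := G p).
set (P11 := fst (fst P)). set (P12 := snd (fst P)). set (P21 := fst (snd P)). set (P22 := snd (snd P)).
set (det := P11*P22 - P12*P21).
assert (dn : 0 < Rabs det) by (apply Rabs_pos_lt; exact Hnd).
set (S := Rabs P11 + Rabs P12 + Rabs P21 + Rabs P22).
assert (Sp : 0 <= S).
{ unfold S. pose proof (Rabs_pos P11). pose proof (Rabs_pos P12).
  pose proof (Rabs_pos P21). pose proof (Rabs_pos P22). lra. }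
set (eta := Rabs det / (10*(S+1))).
assert (etap : 0 < eta) by (unfold eta; apply Rdiv_lt_0_compat; lra).
destruct (gcont d alpha G p HD (proj1 Ha) Hhol eta etap) as [del [[del0 del1] Hdel]].
assert (close : forall q, d p q < del ->
  Rabs (fst (fst (G q)) - P11) <= eta /\ Rabs (snd (fst (G q)) - P12) <= eta /\
  Rabs (fst (snd (G q)) - P21) <= eta /\ Rabs (snd (snd (G q)) - P22) <= eta).
{ intros q Hq. specialize (Hdel q Hq). unfold mat_dist in Hdel. fold P in Hdel.
  rewrite (Rabs_minus_sym (fst (fst (G q))) P11), (Rabs_minus_sym (snd (fst (G q))) P12), (Rabs_minus_sym (fst (snd (G q))) P21), (Rabs_minus_sym (snd (snd (G q))) P22).
  pose proof (Rmax_l (Rmax (Rabs (P11 - fst (fst (G q)))) (Rabs (P12 - snd (fst (G q)))))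
                     (Rmax (Rabs (P21 - fst (snd (G q)))) (Rabs (P22 - snd (snd (G q)))))) as m1.
  pose proof (Rmax_r (Rmax (Rabs (P11 - fst (fst (G q)))) (Rabs (P12 - snd (fst (G q)))))
                     (Rmax (Rabs (P21 - fst (snd (G q)))) (Rabs (P22 - snd (snd (G q)))))) as m2.
  pose proof (Rmax_l (Rabs (P11 - fst (fst (G q)))) (Rabs (P12 - snd (fst (G q))))) as m3.
  pose proof (Rmax_r (Rabs (P11 - fst (fst (G q)))) (Rabs (P12 - snd (fst (G q))))) as m4.
  pose proof (Rmax_l (Rabs (P21 - fst (snd (G q)))) (Rabs (P22 - snd (snd (G q))))) as m5.
  pose proof (Rmax_r (Rabs (P21 - fst (snd (G q)))) (Rabs (P22 - snd (snd (G q))))) as m6.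
  unfold P11, P12, P21, P22 in *. lra. }
destruct (hbound d HD) as [Cz [Czp HCz]].
set (k1 := d H0 (1,0,0)). set (k2 := d H0 (0,1,0)). set (K := k1+k2).
assert (k1p : 0 <= k1) by apply Hd. assert (k2p : 0 <= k2) by apply Hd.
assert (Kp : 0 <= K) by (unfold K; lra).
assert (KC : 0 <= K * Cz) by (apply Rmult_le_pos; lra).
set (eps1 := del / (1 + 20*K*Cz)).
assert (e1p : 0 < eps1) by (unfold eps1; apply Rdiv_lt_0_compat; lra).
assert (e1d : eps1 + 20*K*Cz*eps1 = del) by (unfold eps1; field; lra).
exists eps1. split; [exact e1p|].
intros x y Hx Hy HF Hv. unfold ball in Hx, Hy.
destruct Hd as [Hnn [Hz [Hs Htr]]].
set (z := Hmul (Hinv x) y).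
assert (Dz : d H0 z = d x y).
{ rewrite <- (linv d Hl x z). f_equal. unfold z. destruct x as [[? ?] ?], y as [[? ?] ?]; heq. }
assert (Dxy : d x y < 2*eps1) by (pose proof (Htr x p y); rewrite (Hs x p) in *; lra).
destruct (HCz z) as [Ha1 Hb1]. rewrite Dz in Ha1, Hb1.
set (a := h1 z) in *. set (b := h2 z) in *. set (c := h3 z) in *.
set (M := Rabs a + Rabs b).
assert (M0 : 0 <= M) by (unfold M; pose proof (Rabs_pos a); pose proof (Rabs_pos b); lra).
assert (HM : M * K <= 4*K*Cz*eps1).
{ assert (M <= 4*Cz*eps1) by (unfold M; nra). 
  replace (4*K*Cz*eps1) with (K*(4*Cz*eps1)) by ring. rewrite Rmult_comm.
  apply Rmult_le_compat_l; lra. }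
assert (Hc : Rabs c <= a*a + b*b).
{ unfold vnorm, hnorm in Hv. apply sqrt_le_0 in Hv; auto. apply Rabs_pos. nra. }
set (e := c - a*b).
set (s := sqrt (Rabs e / 2)).
assert (s0 : 0 <= s) by apply sqrt_pos.
assert (ss : s*s = Rabs e / 2) by (apply sqrt_sqrt; pose proof (Rabs_pos e); lra).
assert (sM : s <= M).
{ assert (Rabs e <= Rabs c + Rabs a * Rabs b).
  { unfold e. unfold Rminus. rewrite <- (Rabs_mult a b), <- (Rabs_Ropp (a*b)). apply Rabs_triang. }
  assert (a*a = Rabs a * Rabs a) by (rewrite <- Rabs_mult; symmetry; apply Rabs_right; nra).
  assert (b*b = Rabs b * Rabs b) by (rewrite <- Rabs_mult; symmetry; apply Rabs_right; nra).
  assert (s*s <= M*M) by (unfold M; pose proof (Rabs_pos a); pose proof (Rabs_pos b); nra).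
  nra. }
set (r := if Rle_dec 0 e then s else -s).
assert (rs : 2*s*r = e /\ Rabs r = s).
{ unfold r; destruct (Rle_dec 0 e) as [E|E].
  - rewrite Rabs_right in ss by lra. split; [lra|]. apply Rabs_right; lra.
  - rewrite Rabs_left in ss by lra. split; [lra|]. rewrite Rabs_Ropp. apply Rabs_right; lra. }
destruct rs as [rs1 rs2].
set (q1 := Hmul x (a,0,0)). set (q2 := Hmul q1 (0,b,0)). set (q3 := Hmul q2 (s,0,0)).
set (q4 := Hmul q3 (0,r,0)). set (q5 := Hmul q4 (-s,0,0)). set (q6 := Hmul q5 (0,-r,0)).
assert (q6y : q6 = y).
{ unfold q6, q5, q4, q3, q2, q1. unfold e, c, b, a, z in rs1. clearbody s r. clear - rs1.
  destruct x as [[x1 x2] x3], y as [[y1 y2] y3].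
  unfold Hmul, Hinv, h1, h2, h3 in *; simpl in *. subst a b z. apply (f_equal2 pair); [apply (f_equal2 pair)|]; try ring.
  lra. }
set (L := d p x).
set (B0 := L + Rabs a * k1 + Rabs b * k2 + 2*(s*k1) + 2*(s*k2)).
assert (B0d : B0 < del).
{ assert (Rabs a * k1 <= Rabs a * K) by (apply Rmult_le_compat_l; [apply Rabs_pos|unfold K; lra]).
  assert (Rabs b * k2 <= Rabs b * K) by (apply Rmult_le_compat_l; [apply Rabs_pos|unfold K; lra]).
  assert (s * K <= M * K) by (apply Rmult_le_compat_r; lra).
  assert (L < eps1) by exact Hx.
  assert (0 <= K*Cz*eps1) by (apply Rmult_le_pos; lra).
  unfold B0, K, M in *. lra. }
assert (nearX : forall w t, d p w + Rabs t * k1 <= B0 -> forall th, Rabs th <= Rabs t ->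
   d p (Hmul w (th,0,0)) < del).
{ intros w t Hw th Hth. pose proof (stepX d HD p w th) as T.
  assert (Rabs th * k1 <= Rabs t * k1) by (apply Rmult_le_compat_r; lra). fold k1 in T. lra. }
assert (nearY : forall w t, d p w + Rabs t * k2 <= B0 -> forall th, Rabs th <= Rabs t ->
   d p (Hmul w (0,th,0)) < del).
{ intros w t Hw th Hth. pose proof (stepY d HD p w th) as T.
  assert (Rabs th * k2 <= Rabs t * k2) by (apply Rmult_le_compat_r; lra). fold k2 in T. lra. }
assert (As : Rabs s = s) by (apply Rabs_right; lra).
assert (Ams : Rabs (-s) = s) by (rewrite Rabs_Ropp; exact As).
assert (Amr : Rabs (-r) = s) by (rewrite Rabs_Ropp; exact rs2).
assert (sk1 : 0 <= s * k1) by (apply Rmult_le_pos; lra).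
assert (sk2 : 0 <= s * k2) by (apply Rmult_le_pos; lra).
assert (ak1 : 0 <= Rabs a * k1) by (apply Rmult_le_pos; [apply Rabs_pos|lra]).
assert (bk2 : 0 <= Rabs b * k2) by (apply Rmult_le_pos; [apply Rabs_pos|lra]).
pose proof (stepX d HD p x a) as d1. fold k1 q1 L in d1.
pose proof (stepY d HD p q1 b) as d2. fold k2 q2 in d2.
pose proof (stepX d HD p q2 s) as d3. fold k1 q3 in d3. rewrite As in d3.
pose proof (stepY d HD p q3 r) as d4. fold k2 q4 in d4. rewrite rs2 in d4.
pose proof (stepX d HD p q4 (-s)) as d5. fold k1 q5 in d5. rewrite Ams in d5.
assert (n1 := nearX x a ltac:(unfold B0, L in *; lra)).
assert (n2 := nearY q1 b ltac:(unfold B0, L in *; lra)).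
assert (n3 := nearX q2 s ltac:(rewrite As; unfold B0, L in *; lra)).
assert (n4 := nearY q3 r ltac:(rewrite rs2; unfold B0, L in *; lra)).
assert (n5 := nearX q4 (-s) ltac:(rewrite Ams; unfold B0, L in *; lra)).
assert (n6 := nearY q5 (-r) ltac:(rewrite Amr; unfold B0, L in *; lra)).
assert (G1 : forall q, is_X1_deriv (fun z => fst (F z)) q (fst (fst (G q)))) by (intro q; apply (Hg q)).
assert (G2 : forall q, is_X2_deriv (fun z => fst (F z)) q (snd (fst (G q)))) by (intro q; apply (Hg q)).
assert (G3 : forall q, is_X1_deriv (fun z => snd (F z)) q (fst (snd (G q)))) by (intro q; apply (Hg q)).
assert (G4 : forall q, is_X2_deriv (fun z => snd (F z)) q (snd (snd (G q)))) by (intro q; apply (Hg q)).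
pose proof (segX _ _ x a P11 eta G1 (fun th Hth => proj1 (close _ (n1 th Hth)))) as f11.
pose proof (segX _ _ x a P21 eta G3 (fun th Hth => proj1 (proj2 (proj2 (close _ (n1 th Hth)))))) as f21.
pose proof (segY _ _ q1 b P12 eta G2 (fun th Hth => proj1 (proj2 (close _ (n2 th Hth))))) as f12.
pose proof (segY _ _ q1 b P22 eta G4 (fun th Hth => proj2 (proj2 (proj2 (close _ (n2 th Hth)))))) as f22.
pose proof (segX _ _ q2 s P11 eta G1 (fun th Hth => proj1 (close _ (n3 th Hth)))) as f13.
pose proof (segX _ _ q2 s P21 eta G3 (fun th Hth => proj1 (proj2 (proj2 (close _ (n3 th Hth)))))) as f23.
pose proof (segY _ _ q3 r P12 eta G2 (fun th Hth => proj1 (proj2 (close _ (n4 th Hth))))) as f14.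
pose proof (segY _ _ q3 r P22 eta G4 (fun th Hth => proj2 (proj2 (proj2 (close _ (n4 th Hth)))))) as f24.
pose proof (segX _ _ q4 (-s) P11 eta G1 (fun th Hth => proj1 (close _ (n5 th Hth)))) as f15.
pose proof (segX _ _ q4 (-s) P21 eta G3 (fun th Hth => proj1 (proj2 (proj2 (close _ (n5 th Hth)))))) as f25.
pose proof (segY _ _ q5 (-r) P12 eta G2 (fun th Hth => proj1 (proj2 (close _ (n6 th Hth))))) as f16.
pose proof (segY _ _ q5 (-r) P22 eta G4 (fun th Hth => proj2 (proj2 (proj2 (close _ (n6 th Hth)))))) as f26.
cbv beta in f11, f12, f13, f14, f15, f16, f21, f22, f23, f24, f25, f26.
fold q1 in f11, f21. fold q2 in f12, f22. fold q3 in f13, f23. fold q4 in f14, f24. fold q5 in f15, f25.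
assert (q6y2 : Hmul q5 (0,-r,0) = y) by exact q6y. rewrite q6y2 in f16, f26.
rewrite As in f13, f23. rewrite rs2 in f14, f24. rewrite Ams in f15, f25. rewrite Amr in f16, f26.
apply absle in f11, f12, f13, f14, f15, f16, f21, f22, f23, f24, f25, f26.
assert (HF1 : fst (F x) = fst (F y)) by (rewrite HF; reflexivity).
assert (HF2 : snd (F x) = snd (F y)) by (rewrite HF; reflexivity).
set (E := Rabs a * eta + Rabs b * eta + 4*(s*eta)).
assert (u1 : Rabs (a*P11 + b*P12) <= E).
{ apply Rabs_le. unfold E. lra. }
assert (u2 : Rabs (a*P21 + b*P22) <= E).
{ apply Rabs_le. unfold E. lra. }
assert (EM : E <= 5 * (M * eta)).
{ assert (s*eta <= M*eta) by (apply Rmult_le_compat_r; lra). unfold E, M in *. lra. }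
assert (Pa : Rabs det * Rabs a <= (Rabs P22 + Rabs P12) * (5*(M*eta))).
{ rewrite <- Rabs_mult. replace (det*a) with (P22*(a*P11 + b*P12) - P12*(a*P21 + b*P22)) by (unfold det; ring).
  eapply Rle_trans. apply Rabs_triang. rewrite Rabs_Ropp, !Rabs_mult.
  assert (Rabs P22 * Rabs (a * P11 + b * P12) <= Rabs P22 * (5*(M*eta))) by (apply Rmult_le_compat_l; [apply Rabs_pos|lra]).
  assert (Rabs P12 * Rabs (a * P21 + b * P22) <= Rabs P12 * (5*(M*eta))) by (apply Rmult_le_compat_l; [apply Rabs_pos|lra]).
  lra. }
assert (Pb : Rabs det * Rabs b <= (Rabs P11 + Rabs P21) * (5*(M*eta))).
{ rewrite <- Rabs_mult. replace (det*b) with (P11*(a*P21 + b*P22) - P21*(a*P11 + b*P12)) by (unfold det; ring).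
  eapply Rle_trans. apply Rabs_triang. rewrite Rabs_Ropp, !Rabs_mult.
  assert (Rabs P11 * Rabs (a * P21 + b * P22) <= Rabs P11 * (5*(M*eta))) by (apply Rmult_le_compat_l; [apply Rabs_pos|lra]).
  assert (Rabs P21 * Rabs (a * P11 + b * P12) <= Rabs P21 * (5*(M*eta))) by (apply Rmult_le_compat_l; [apply Rabs_pos|lra]).
  lra. }
assert (Sd : S * (5*eta) <= Rabs det / 2).
{ unfold eta. apply (Rmult_le_reg_r (10*(S+1))). lra.
  replace (S * (5 * (Rabs det / (10 * (S + 1)))) * (10 * (S + 1))) with (S * 5 * Rabs det) by (field; lra).
  replace (Rabs det / 2 * (10 * (S + 1))) with (5 * S * Rabs det + 5 * Rabs det) by field. lra. }
assert (Mz : M = 0).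
{ assert (Rabs det * M <= S * (5*eta) * M) by (unfold M, S in *; lra).
  assert (S * (5*eta) * M <= Rabs det / 2 * M) by (apply Rmult_le_compat_r; lra).
  assert (Rabs det * M <= 0) by lra.
  destruct (Req_dec M 0); auto. assert (0 < Rabs det * M) by (apply Rmult_lt_0_compat; lra). lra. }
assert (a0 : a = 0). { destruct (Req_dec a 0) as [Q|Q]; auto. pose proof (Rabs_pos_lt a Q). pose proof (Rabs_pos b). unfold M in Mz. lra. }
assert (b0 : b = 0). { destruct (Req_dec b 0) as [Q|Q]; auto. pose proof (Rabs_pos_lt b Q). pose proof (Rabs_pos a). unfold M in Mz. lra. }
assert (c0 : c = 0). { rewrite a0, b0 in Hc. pose proof (Rabs_pos c). destruct (Req_dec c 0) as [Hc0|Hc0]; auto. pose proof (Rabs_pos_lt c Hc0). lra. }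
unfold a, b, c, z in a0, b0, c0. clear - a0 b0 c0.
destruct x as [[x1 x2] x3], y as [[y1 y2] y3].
unfold Hmul, Hinv, h1, h2, h3 in *; simpl in *.
assert (y1 = x1) by lra. assert (y2 = x2) by lra. subst.
apply (f_equal2 pair); [apply (f_equal2 pair)|]; lra.
Qed.
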